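(* Let $r>0$, $\kappa>0$, $\tau>0$ and $p\in[0,1]$ be fixed, with $\varepsilon=pe^{-\tau}<1$, and set \[ q_c:=1-\frac{1}{r}\,\frac{1}{1-\varepsilon}. \] For $q\in\mathbb{R}$ let $u(q)=(1-q,0,q)$ and consider the disease-free equilibrium $\widehat{u(q)}$ of the SIQ system, whose eigenvalues are the roots (counted with multiplicity as zeros of an analytic function) of \[ \chi_q(\lambda)=\lambda\Big(\lambda+1-r(1-q)\big(1-\varepsilon e^{-\tau\lambda}\big)\Big). \] If $q\ge q_c$, then $\widehat{u(q)}$ is linearly stable, and if $q<q_c$, then $\widehat{u(q)}$ is linearly unstable. In more detail: for $q\ne q_c$ the eigenvalue $\lambda=0$ has multiplicity $1$ and there is no other eigenvalue on the imaginary axis; for $q\ge q_c$ all nonzero eigenvalues $\lambda$ satisfy $\mathrm{Re}(\lambda)<0$; for $q<q_c$ there is exactly one eigenvalue $\lambda_1$ with $\mathrm{Re}(\lambda_1)>0$.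
   Context: The SIQ system is \[ \dot S(t)=-rS(t)I(t)+I(t)+r\varepsilon S(t-\tau-\kappa)I(t-\tau-\kappa),\quad \dot I(t)=rS(t)I(t)-I(t)-r\varepsilon S(t-\tau)I(t-\tau), \] \[ \dot Q(t)=r\varepsilon\big[S(t-\tau)I(t-\tau)-S(t-\tau-\kappa)I(t-\tau-\kappa)\big], \] with $\varepsilon=pe^{-\tau}$, considered on continuous histories on $[-\tau-\kappa,0]$ with $S+I+Q\equiv1$. For $u\in\mathbb{R}^3$, $\hat u$ is the constant function with value $u$. The function $\chi_q$ is the characteristic function of the linearization at $\widehat{u(q)}$. An equilibrium on this line of equilibria is called linearly stable if all eigenvalues other than $\lambda=0$ have negative real part, and linearly unstable if some eigenvalue has positive real part. *)

(* Defs.v *)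
From Stdlib Require Import Reals.
From Coquelicot Require Import Coquelicot.
Open Scope R_scope.

Definition Cexp (z : C) : C :=
  (exp (Re z) * cos (Im z), exp (Re z) * sin (Im z)).

Definition eps (p tau : R) : R := p * exp (- tau).

Definition q_crit (r p tau : R) : R := 1 - / r * / (1 - eps p tau).

Definition chi (r p tau q : R) (l : C) : C :=
  Cmult l (Cminus (Cplus l (RtoC 1))
             (Cmult (RtoC (r * (1 - q)))
                (Cminus (RtoC 1) (Cmult (RtoC (eps p tau)) (Cexp (Cmult (RtoC (- tau)) l)))))).

Definition eigenvalue (r p tau q : R) (l : C) : Prop := chi r p tau q l = RtoC 0.

(* lambda is an eigenvalue of multiplicity exactly 1, i.e. a simple zero of the
   analytic function chi_q: chi_q(lambda) = 0 and chi_q'(lambda) <> 0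
   (complex derivative). *)
Definition simple_eigenvalue (r p tau q : R) (l : C) : Prop :=
  eigenvalue r p tau q l /\
  exists d : C, @is_derive C_AbsRing C_NormedModule (chi r p tau q) l d /\ d <> RtoC 0.

Definition linearly_stable (r p tau q : R) : Prop :=
  forall l : C, eigenvalue r p tau q l -> l <> RtoC 0 -> Re l < 0.

Definition linearly_unstable (r p tau q : R) : Prop :=
  exists l : C, eigenvalue r p tau q l /\ Re l > 0.

(* Main.v *)
Require Import Defs.
From Stdlib Require Import Reals.
From Coquelicot Require Import Coquelicot.
Open Scope R_scope.
From Stdlib Require Import Lra Psatz.

Lemma abs_inv a b : Rabs a <= b -> -b <= a <= b.
Proof. unfold Rabs; destruct Rcase_abs; lra. Qed.

Lemma exp_inv u : exp u * exp (-u) = 1.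
Proof. rewrite <- exp_plus; replace (u + - u) with 0 by ring; apply exp_0. Qed.

Lemma exp_l1 u : Rabs u <= /2 -> 0 <= exp u - 1 - u <= 2 * u^2.
Proof.
  intros Hu. apply abs_inv in Hu.
  pose proof (exp_ineq1_le u). pose proof (exp_ineq1_le (-u)).
  pose proof (exp_inv u).
  pose proof (exp_pos u). pose proof (exp_pos (-u)).
  split. lra.
  assert (exp u * (1 - u) <= 1) by nra. nra.
Qed.

Lemma sin_abs v : Rabs (sin v) <= Rabs v.
Proof.
  assert (H: forall v, 0 <= v -> Rabs (sin v) <= v).
  { intros w Hw. destruct (Rle_lt_dec w 1).
    - destruct (Req_dec w 0). subst. rewrite sin_0, Rabs_R0. lra.
      pose proof (sin_lt_x w ltac:(lra)). pose proof PI2_1.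
      assert (0 <= sin w) by (apply sin_ge_0; lra). rewrite Rabs_pos_eq; lra.
    - pose proof (SIN_bound w). apply Rabs_le; lra. }
  destruct (Rle_lt_dec 0 v).
  - rewrite (Rabs_pos_eq v) by lra. auto.
  - replace v with (- - v) by ring. rewrite sin_neg, Rabs_Ropp.
    rewrite (Rabs_left1 (- - v)) by lra. replace (- - - v) with (-v) by ring. apply H; lra.
Qed.

Lemma sin_sq v : sin v ^ 2 <= v ^ 2.
Proof.
  pose proof (sin_abs v). apply Rsqr_le_abs_1 in H. unfold Rsqr in H. nra.
Qed.

Lemma cos_l1 v : 0 <= 1 - cos v <= v^2/2.
Proof.
  replace v with (2 * (v/2)) by field. rewrite cos_2a_sin.
  pose proof (sin_sq (v/2)). split; nra.
Qed.

Lemma sin_l2 v : Rabs v <= 1 -> Rabs (sin v - v) <= v^2.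
Proof.
  assert (H: forall v, 0 <= v <= 1 -> Rabs (sin v - v) <= v^2).
  { intros w Hw. pose proof PI2_1.
    destruct (sin_bound w 0 ltac:(lra) ltac:(lra)) as [H1 _].
    replace (sin_approx w (2*0+1)) with (w - w^3/6) in H1
      by (unfold sin_approx, sin_term; simpl; field).
    destruct (Req_dec w 0). subst. rewrite sin_0. rewrite Rminus_0_r, Rabs_R0. lra.
    pose proof (sin_lt_x w ltac:(lra)).
    rewrite Rabs_left1 by lra. nra. }
  intros Hv. destruct (Rle_lt_dec 0 v).
  - apply H. apply abs_inv in Hv. lra.
  - replace v with (- - v) by ring. rewrite sin_neg.
    replace (- sin (- v) - - - v) with (- (sin (-v) - - v)) by ring.
    rewrite Rabs_Ropp. replace ((- - v)^2) with ((-v)^2) by ring.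
    apply H. apply abs_inv in Hv. lra.
Qed.

Lemma key u v : 0 <= u -> (1 - exp (-u) * cos v)^2 + (exp (-u) * sin v)^2 <= u^2 + v^2.
Proof.
  intros Hu.
  pose proof (exp_ineq1_le (-u)). pose proof (exp_pos (-u)).
  pose proof (exp_ineq1_le u). pose proof (exp_inv u).
  assert (exp (-u) <= 1) by nra.
  pose proof (cos_l1 v). pose proof (sin2_cos2 v). unfold Rsqr in *.
  replace ((1 - exp (-u) * cos v)^2 + (exp (-u) * sin v)^2) with
    ((1 - exp (-u))^2 + 2 * exp (-u) * (1 - cos v)) by nra.
  assert ((1 - exp (-u))^2 <= u^2) by nra.
  nra.
Qed.

Lemma Cexp_add z h : Cexp (Cplus z h) = Cmult (Cexp z) (Cexp h).
Proof.
  destruct z as [x y], h as [u v]. unfold Cexp, Cplus, Cmult; simpl.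
  rewrite exp_plus, cos_plus, sin_plus. f_equal; ring.
Qed.

Lemma Cmod_sq_bound (a b m : R) : 0 <= m -> a^2 + b^2 <= m^2 -> Cmod (a,b) <= m.
Proof.
  intros Hm H. unfold Cmod; simpl.
  rewrite <- (sqrt_pow2 m Hm). apply sqrt_le_1_alt. simpl in *. lra.
Qed.

Lemma comp_le_Cmod (h : C) : Rabs (fst h) <= Cmod h /\ Rabs (snd h) <= Cmod h.
Proof.
  destruct h as [u v]. unfold Cmod; simpl.
  pose proof (sqrt_pos (u*(u*1) + v*(v*1))).
  pose proof (sqrt_sqrt (u*(u*1) + v*(v*1)) ltac:(nra)).
  split; rewrite <- (Rabs_pos_eq (sqrt _)) by lra; apply Rsqr_le_abs_0; unfold Rsqr; nra.
Qed.

Lemma Cexp_bound h : Cmod h <= /2 -> Cmod (Cminus (Cminus (Cexp h) (RtoC 1)) h) <= 4 * (Cmod h)^2.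
Proof.
  intros Hh. destruct (comp_le_Cmod h) as [Hu Hv].
  pose proof (Cmod2_alt h) as Hm. pose proof (Cmod_ge_0 h).
  destruct h as [u v]. simpl in Hu, Hv, Hm.
  set (m := Cmod (u,v)) in *.
  unfold Cexp, Cminus, Cplus, Copp, RtoC; simpl.
  assert (Hu2: Rabs u <= /2) by lra. assert (Hv1: Rabs v <= 1) by lra.
  pose proof (exp_l1 u Hu2). pose proof (cos_l1 v). pose proof (sin_l2 v Hv1).
  pose proof (sin_abs v). pose proof (COS_bound v).
  apply abs_inv in Hu2. 
  assert (A1: Rabs (exp u * cos v + - (1) + - u) <= 2 * m^2).
  { replace (exp u * cos v + - (1) + - u) with
      ((exp u - 1 - u) * cos v - (1+u) * (1 - cos v)) by ring.
    apply Rabs_le. split; nra. }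
  assert (A2: Rabs (exp u * sin v + - 0 + - v) <= 2 * m^2).
  { replace (exp u * sin v + - 0 + - v) with
      ((exp u - 1) * sin v + (sin v - v)) by ring.
    eapply Rle_trans. apply Rabs_triang. rewrite Rabs_mult.
    assert (Rabs (exp u - 1) <= 2 * Rabs u).
    { apply Rabs_le. unfold Rabs; destruct Rcase_abs; nra. }
    assert (Rabs (exp u - 1) * Rabs (sin v) <= 2 * Rabs u * Rabs v).
    { apply Rmult_le_compat; auto using Rabs_pos. }
    assert (Rabs u * Rabs v * 2 <= u^2 + v^2).
    { assert (Rabs u ^2 = u^2) by (unfold Rabs; destruct Rcase_abs; ring).
      assert (Rabs v ^2 = v^2) by (unfold Rabs; destruct Rcase_abs; ring).
      pose proof (pow2_ge_0 (Rabs u - Rabs v)). lra. }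
    nra. }
  apply Cmod_sq_bound. nra.
  rewrite <- (pow2_abs (exp u * cos v + - (1) + - u)), <- (pow2_abs (exp u * sin v + - 0 + - v)).
  pose proof (Rabs_pos (exp u * cos v + - (1) + - u)). pose proof (Rabs_pos (exp u * sin v + - 0 + - v)).
  nra.
Qed.

Lemma Cexp_derive z : @is_derive C_AbsRing C_NormedModule Cexp z (Cexp z).
Proof.
  split. apply is_linear_scal_l.
  intros x Hx. apply (@is_filter_lim_locally_unique _ (AbsRing_NormedModule C_AbsRing)) in Hx. subst x.
  intros eps.
  set (M := Cmod (Cexp z)).
  assert (HM: 0 <= M) by apply Cmod_ge_0.
  assert (Hd: 0 < Rmin (/2) (eps / (4 * M + 1))).
  { apply Rmin_pos. lra. apply Rdiv_lt_0_compat. apply cond_pos. lra. }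
  exists (mkposreal _ Hd). intros y Hy. simpl in Hy. 
  change (Cmod (Cminus y z) < Rmin (/ 2) (eps / (4 * M + 1))) in Hy.
  change (Cmod (Cminus (Cminus (Cexp y) (Cexp z)) (Cmult (Cminus y z) (Cexp z))) <= eps * Cmod (Cminus y z)).
  set (h := Cminus y z) in *.
  assert (Hy': @eq C y (Cplus z h)) by (unfold h; change C in y, z; ring).
  rewrite Hy', Cexp_add.
  replace (Cminus (Cminus (Cmult (Cexp z) (Cexp h)) (Cexp z)) (Cmult h (Cexp z)))
    with (Cmult (Cexp z) (Cminus (Cminus (Cexp h) (RtoC 1)) h)) by ring.
  rewrite Cmod_mult. fold M.
  assert (H1: Cmod h <= /2) by (pose proof (Rmin_l (/2) (eps / (4 * M + 1))); lra).
  assert (H2: Cmod h <= eps / (4 * M + 1)) by (pose proof (Rmin_r (/2) (eps / (4 * M + 1))); lra).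
  pose proof (Cexp_bound h H1). pose proof (Cmod_ge_0 h).
  pose proof (cond_pos eps).
  assert (H5: Cmod h * (4 * M + 1) <= eps).
  { apply (Rmult_le_compat_r (4*M+1)) in H2; [|lra].
    unfold Rdiv in H2. rewrite Rmult_assoc, Rinv_l in H2; lra. }
  apply Rle_trans with (M * (4 * Cmod h ^ 2)). apply Rmult_le_compat_l; lra.
  nra.
Qed.

Definition G (A E tau : R) (l : C) : C :=
  Cminus (Cplus l (RtoC 1))
    (Cmult (RtoC A) (Cminus (RtoC 1) (Cmult (RtoC E) (Cexp (Cmult (RtoC (- tau)) l))))).

Lemma chi_G r p tau q l : chi r p tau q l = Cmult l (G (r * (1 - q)) (eps p tau) tau l).
Proof. reflexivity. Qed.

Lemma is_derive_eq (f : C -> C) x l1 l2 :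
  @is_derive C_AbsRing C_NormedModule f x l1 -> l1 = l2 -> @is_derive C_AbsRing C_NormedModule f x l2.
Proof. intros H ->; exact H. Qed.

Notation CD := (@is_derive C_AbsRing C_NormedModule).

Lemma dC_plus (f g : C -> C) x df dg : CD f x df -> CD g x dg ->
  CD (fun t => Cplus (f t) (g t)) x (Cplus df dg).
Proof. intros H1 H2. exact (is_derive_plus f g x df dg H1 H2). Qed.

Lemma dC_minus (f g : C -> C) x df dg : CD f x df -> CD g x dg ->
  CD (fun t => Cminus (f t) (g t)) x (Cminus df dg).
Proof. intros H1 H2. exact (is_derive_minus f g x df dg H1 H2). Qed.

Lemma dC_const (c : C) x : CD (fun _ => c) x (RtoC 0).
Proof. exact (is_derive_const c x). Qed.

Lemma dC_id x : CD (fun t => t) x (RtoC 1).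
Proof.
  pose proof (@is_derive_scal_l C_AbsRing C_NormedModule (fun t => t) x one (RtoC 1) (is_derive_id x)) as H.
  eapply is_derive_eq; [eapply is_derive_ext; [|exact H]|].
  - intros t. change (Cmult t (RtoC 1) = t). apply Cmult_1_r.
  - change (Cmult (RtoC 1) (RtoC 1) = RtoC 1). apply Cmult_1_r.
Qed.

Lemma transp (f : C -> C) x d : @is_derive C_AbsRing (AbsRing_NormedModule C_AbsRing) f x d -> CD f x d.
Proof.
  intros [Hl Hd]. split.
  - destruct Hl as [a b [M HM]]. constructor; auto. exists M; exact HM.
  - exact Hd.
Qed.

Lemma transp' (f : C -> C) x d : CD f x d -> @is_derive C_AbsRing (AbsRing_NormedModule C_AbsRing) f x d.
Proof.
  intros [Hl Hd]. split.
  - destruct Hl as [a b [M HM]]. constructor; auto. exists M; exact HM.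
  - exact Hd.
Qed.

Lemma dC_mul (f g : C -> C) x df dg : CD f x df -> CD g x dg ->
  CD (fun t => Cmult (f t) (g t)) x (Cplus (Cmult df (g x)) (Cmult (f x) dg)).
Proof. intros H1 H2. apply transp. exact (is_derive_mult f g x df dg (transp' _ _ _ H1) (transp' _ _ _ H2) Cmult_comm). Qed.
Lemma G_derive A E tau l :
  @is_derive C_AbsRing C_NormedModule (G A E tau) l
    (Cplus (RtoC 1) (Cmult (RtoC (A * E * - tau)) (Cexp (Cmult (RtoC (- tau)) l)))).
Proof.
  assert (H1: @is_derive C_AbsRing C_NormedModule (fun t => Cexp (Cmult (RtoC (- tau)) t)) l
     (Cmult (RtoC (-tau)) (Cexp (Cmult (RtoC (- tau)) l)))).
  { pose proof (@is_derive_comp C_AbsRing C_NormedModule Cexp (fun t => scal t (RtoC (-tau))) l _ _ (Cexp_derive _)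
       (@is_derive_scal_l C_AbsRing (AbsRing_NormedModule C_AbsRing) (fun t => t) l one (RtoC (-tau)) (is_derive_id l))) as H.
    
    eapply is_derive_eq; [eapply is_derive_ext; [|exact H] |].
    - intros t. cbv beta.  change (scal t (RtoC (-tau))) with (Cmult t (RtoC (-tau))).  rewrite Cmult_comm. reflexivity.
    -  change (scal l (RtoC (-tau))) with (Cmult l (RtoC (-tau))). 
      change (scal one (RtoC (-tau))) with (Cmult (RtoC 1) (RtoC (-tau))). 
      change (scal (Cmult (RtoC 1) (RtoC (-tau))) (Cexp (Cmult l (RtoC (- tau))))) with
        (Cmult (Cmult (RtoC 1) (RtoC (-tau))) (Cexp (Cmult l (RtoC (- tau))))). 
      rewrite (Cmult_comm l), Cmult_1_l. reflexivity. }
  pose proof (dC_minus _ _ l _ _ (dC_plus _ _ l _ _ (dC_id l) (dC_const (RtoC 1) l))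
     (dC_mul _ _ l _ _ (dC_const (RtoC A) l) (dC_minus _ _ l _ _ (dC_const (RtoC 1) l)
        (dC_mul _ _ l _ _ (dC_const (RtoC E) l) H1)))) as H.
  eapply is_derive_eq. exact H.
  cbv beta. match goal with |- ?a = ?b => change (@eq C a b) end.
  rewrite !RtoC_mult. ring.
Qed.

Lemma chi_derive r p tau q l :
  CD (chi r p tau q) l
    (Cplus (G (r * (1 - q)) (eps p tau) tau l)
       (Cmult l (Cplus (RtoC 1) (Cmult (RtoC (r * (1 - q) * eps p tau * - tau)) (Cexp (Cmult (RtoC (- tau)) l)))))).
Proof.
  pose proof (dC_mul _ _ l _ _ (dC_id l) (G_derive (r * (1 - q)) (eps p tau) tau l)) as H.
  eapply is_derive_eq. exact H. cbv beta. match goal with |- ?a = ?b => change (@eq C a b) end.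
  rewrite Cmult_1_l. reflexivity.
Qed.

Lemma G_comp A E tau x y : G A E tau (x,y) =
  (x + 1 - A + A*E*exp(-(tau*x))*cos(tau*y), y - A*E*exp(-(tau*x))*sin(tau*y)).
Proof.
  unfold G, Cexp, Cminus, Cplus, Cmult, Copp, RtoC; simpl.
  replace (- tau * x - 0 * y) with (-(tau*x)) by ring.
  replace (- tau * y + 0 * x) with (-(tau*y)) by ring.
  rewrite cos_neg, sin_neg. f_equal; ring.
Qed.

Lemma Cexp_real tau x : Cexp (Cmult (RtoC (-tau)) (RtoC x)) = RtoC (exp (-(tau*x))).
Proof.
  unfold Cexp, Cmult, RtoC; simpl.
  replace (- tau * x - 0 * 0) with (-(tau*x)) by ring.
  replace (- tau * 0 + 0 * x) with 0 by ring.
  rewrite cos_0, sin_0. f_equal; ring.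
Qed.

Lemma chord a b t : 0 <= t <= 1 -> exp ((1-t)*a + t*b) <= (1-t)*exp a + t * exp b.
Proof.
  intros Ht. set (m := (1-t)*a + t*b).
  assert (Ha: exp a = exp m * exp (a - m)) by (rewrite <- exp_plus; f_equal; ring).
  assert (Hb: exp b = exp m * exp (b - m)) by (rewrite <- exp_plus; f_equal; ring).
  pose proof (exp_ineq1_le (a - m)). pose proof (exp_ineq1_le (b - m)).
  pose proof (exp_pos m).
  rewrite Ha, Hb.
  assert (exp m * ((1-t) * exp (a-m) + t * exp (b-m)) >= exp m * ((1-t)*(1 + (a-m)) + t*(1+(b-m)))).
  { apply Rle_ge, Rmult_le_compat_l. lra. nra. }
  replace ((1-t)*(1 + (a-m)) + t*(1+(b-m))) with 1 in H2 by (unfold m; ring).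
  nra.
Qed.

Lemma exp_neg_le1 z : 0 <= z -> exp (-z) <= 1.
Proof.
  intros Hz. pose proof (exp_ineq1_le z). pose proof (exp_inv z). pose proof (exp_pos (-z)).
  assert (exp (-z) * (exp z - 1) >= 0) by (apply Rle_ge, Rmult_le_pos; lra). nra.
Qed.

Section Core.
Variables A E tau : R.
Hypothesis Htau : 0 < tau.
Hypothesis HE0 : 0 <= E.
Hypothesis HE1 : E * (1 + tau) < 1.

Lemma no_right x y : A * (1 - E) <= 1 ->
  x + 1 - A + A*E*exp(-(tau*x))*cos(tau*y) = 0 ->
  y - A*E*exp(-(tau*x))*sin(tau*y) = 0 -> 0 <= x -> x = 0 /\ y = 0.
Proof.
  intros Hc HR HI Hx.
  set (e := exp (-(tau*x))) in *.
  assert (He: 0 < e) by apply exp_pos.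
  assert (He1: e <= 1).
  { apply exp_neg_le1. nra. }
  pose proof (COS_bound (tau*y)).
  destruct (Rle_lt_dec A 0) as [HA|HA].
  - exfalso. assert (E < 1) by nra.
    assert (- A * E * e * cos (tau*y) <= - A) .
    { assert (0 <= -A * E * e) by (apply Rmult_le_pos; [nra|lra]).
      assert (E*e <= 1) by (apply Rle_trans with (E*1); [apply Rmult_le_compat_l|]; lra).
      assert (-A*(E*e) <= -A*1) by (apply Rmult_le_compat_l; lra).
      assert (-A*E*e*cos (tau*y) <= -A*E*e*1) by (apply Rmult_le_compat_l; lra).
      lra. }
    nra.
  - set (c := 1 - A * (1 - E)).
    assert (Hk: A * E * tau < 1).
    { assert (E*tau*(A*(1-E)) <= E*tau*1) by (apply Rmult_le_compat_l; nra).
      assert (HE: 0 < 1 - E) by nra.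
      assert (A*E*tau*(1-E) < 1*(1-E)) by nra.
      apply Rmult_lt_reg_r with (1-E); lra. }
    assert (Hk0: 0 <= A * E * tau) by (apply Rmult_le_pos; nra).
    pose proof (key (tau*x) (tau*y) ltac:(nra)) as K. fold e in K.
    assert (E1: x + c = A*E*(1 - e * cos (tau*y))) by (unfold c; lra).
    assert (E2: y = A*E*(e * sin (tau*y))) by lra.
    assert (S: (x+c)^2 + y^2 = (A*E)^2 * ((1 - e * cos (tau*y))^2 + (e * sin (tau*y))^2))
      by (replace ((A*E)^2 * ((1 - e * cos (tau*y))^2 + (e * sin (tau*y))^2)) with
            ((A*E*(1 - e * cos (tau*y)))^2 + (A*E*(e * sin (tau*y)))^2) by ring;
          rewrite <- E1, <- E2; reflexivity).
    assert (S2: (x+c)^2 + y^2 <= (A*E*tau)^2 * (x^2+y^2)).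
    { rewrite S. replace ((A*E*tau)^2 * (x^2+y^2)) with ((A*E)^2 * ((tau*x)^2 + (tau*y)^2)) by ring.
      apply Rmult_le_compat_l. nra. exact K. }
    assert (x^2 <= (x+c)^2) by (unfold c in *; nra).
    assert ((A*E*tau)^2 < 1) by nra.
    assert (x^2 + y^2 = 0) by nra.
    split; nra.
Qed.

Lemma imag_axis y : 1 < A * (1 - E) ->
  0 + 1 - A + A*E*exp(-(tau*0))*cos(tau*y) = 0 -> False.
Proof.
  intros Hc HR. rewrite Rmult_0_r, Ropp_0, exp_0 in HR.
  pose proof (COS_bound (tau*y)).
  assert (E < 1) by nra.
  assert (0 < A) by (destruct (Rle_lt_dec A 0); [assert (A*(1-E) <= 0) by (apply Rmult_le_0_r; lra); lra | lra]).
  assert (0 <= A*E) by (apply Rmult_le_pos; lra).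
  assert (A*E*(1 - cos (tau*y)) >= 0) by (apply Rle_ge, Rmult_le_pos; lra).
  nra.
Qed.

Definition g x := x + 1 - A + A*E*exp(-(tau*x)).

Lemma exist_root : 1 < A * (1 - E) ->
  exists xs, 0 < xs /\ g xs = 0 /\ A * E * tau * exp (-(tau*xs)) < 1.
Proof.
  intros Hc. assert (HA: 0 < A) by nra.
  assert (Hcont: continuity g).
  { unfold g. reg. }
  assert (g0: g 0 < 0) by (unfold g; rewrite Rmult_0_r, Ropp_0, exp_0; nra).
  assert (gA: 0 < g A).
  { unfold g. pose proof (exp_pos (-(tau*A))). assert (0 <= A*E) by nra. nra. }
  destruct (IVT g 0 A Hcont HA g0 gA) as [xs [Hxs Hg]].
  assert (0 < xs).
  { destruct (Req_dec xs 0). subst. lra. lra. }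
  exists xs. split; [lra|split; [exact Hg|]].
  unfold g in Hg, g0. rewrite Rmult_0_r, Ropp_0, exp_0 in g0.
  set (e := exp (-(tau*xs))) in *.
  pose proof (exp_ineq1_le (tau*xs)) as X1. pose proof (exp_inv (tau*xs)) as X2.
  fold e in X2. pose proof (exp_pos (-(tau*xs))) as X3. fold e in X3.
  assert (X4: 1 >= e * (1 + tau * xs)) by nra.
  assert (X5: xs > A * E * (1 - e)) by nra.
  assert (X6: A*E >= 0) by (apply Rle_ge, Rmult_le_pos; lra).
  assert (X7: A * E * (1 - e) >= A * E * (tau * xs * e)) by (apply Rle_ge, Rmult_le_compat_l; lra).
  assert (X8: A * E * tau * e * xs < 1 * xs) by nra.
  apply Rmult_lt_reg_r with xs; lra.
Qed.

Lemma uniq_root xs x y : 1 < A * (1 - E) -> 0 < xs -> g xs = 0 -> A * E * tau * exp (-(tau*xs)) < 1 ->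
  x + 1 - A + A*E*exp(-(tau*x))*cos(tau*y) = 0 ->
  y - A*E*exp(-(tau*x))*sin(tau*y) = 0 -> 0 < x -> x = xs /\ y = 0.
Proof.
  intros Hc Hxs Hg Hk HR HI Hx.
  assert (HA: 0 < A) by nra.
  pose proof (COS_bound (tau*y)).
  assert (HAE: 0 <= A * E) by nra.
  assert (Hge: xs <= x).
  { destruct (Rle_lt_dec xs x) as [|Hlt]; [auto|exfalso].
    set (t := x / xs).
    assert (Ht: t * xs = x) by (unfold t; field; lra).
    assert (Ht1: 0 <= t <= 1).
    { unfold t. split. apply Rdiv_le_0_compat; lra.
      apply Rmult_le_reg_r with xs; [lra|]. unfold Rdiv. rewrite Rmult_assoc, Rinv_l; lra. }
    assert (Ht2: t < 1) by nra.
    pose proof (chord 0 (-(tau*xs)) t Ht1) as Ch.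
    replace ((1-t)*0 + t*(-(tau*xs))) with (-(tau*x)) in Ch by (rewrite <- Ht; ring).
    rewrite exp_0 in Ch.
    assert (gx: g x >= 0).
    { unfold g. pose proof (exp_pos (-(tau*x))).
      assert (A*E*exp(-(tau*x))*(1 - cos (tau*y)) >= 0) by (apply Rle_ge, Rmult_le_pos; [apply Rmult_le_pos|]; lra).
      nra. }
    unfold g in gx, Hg.
    assert (x + 1 - A + A*E*exp(-(tau*x)) <= x + 1 - A + A*E*((1-t)*1 + t*exp(-(tau*xs)))).
    { apply Rplus_le_compat_l. apply Rmult_le_compat_l; auto. }
    nra. }
  set (es := exp (-(tau*xs))) in *.
  set (u := tau * (x - xs)).
  assert (Hex: exp (-(tau*x)) = es * exp (-u)) by (unfold es, u; rewrite <- exp_plus; f_equal; ring).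
  rewrite Hex in HR, HI. unfold g in Hg. fold es in Hg.
  pose proof (key u (tau*y) ltac:(unfold u; nra)) as K.
  set (k := A*E*es).
  assert (E1: x - xs = k * (1 - exp (-u) * cos (tau*y))) by (unfold k; lra).
  assert (E2: y = k * (exp (-u) * sin (tau*y))) by (unfold k; lra).
  assert (S: (x-xs)^2 + y^2 = k^2 * ((1 - exp (-u) * cos (tau*y))^2 + (exp (-u) * sin (tau*y))^2))
      by (replace (k^2 * ((1 - exp (-u) * cos (tau*y))^2 + (exp (-u) * sin (tau*y))^2)) with
            ((k * (1 - exp (-u) * cos (tau*y)))^2 + (k * (exp (-u) * sin (tau*y)))^2) by ring;
          rewrite <- E1, <- E2; reflexivity).
  assert (S2: (x-xs)^2 + y^2 <= (k*tau)^2 * ((x-xs)^2+y^2)).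
  { replace ((k*tau)^2 * ((x-xs)^2+y^2)) with (k^2 * (u^2 + (tau*y)^2)) by (unfold u; ring). rewrite S.
    apply Rmult_le_compat_l. nra. exact K. }
  assert (0 <= k * tau) by (unfold k, es; pose proof (exp_pos (-(tau*xs))); apply Rmult_le_pos; [apply Rmult_le_pos|]; lra).
  assert ((k*tau)^2 < 1) by (unfold k in *; nra).
  assert ((x-xs)^2 + y^2 = 0) by nra.
  split; nra.
Qed.

End Core.

Lemma eig_comp r p tau q x y : eigenvalue r p tau q (x,y) -> (x,y) <> RtoC 0 ->
  x + 1 - r*(1-q) + r*(1-q)*eps p tau*exp(-(tau*x))*cos(tau*y) = 0 /\
  y - r*(1-q)*eps p tau*exp(-(tau*x))*sin(tau*y) = 0.
Proof.
  intros H Hn. unfold eigenvalue in H. rewrite chi_G in H.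
  destruct (Ceq_dec (G (r * (1 - q)) (eps p tau) tau (x,y)) (RtoC 0)) as [HG|HG].
  - rewrite G_comp in HG. injection HG. intros; split; lra.
  - exfalso. exact (Cmult_neq_0 _ _ Hn HG H).
Qed.

Lemma root_eig r p tau q xs : g (r*(1-q)) (eps p tau) tau xs = 0 -> eigenvalue r p tau q (RtoC xs).
Proof.
  intros Hg. unfold eigenvalue. rewrite chi_G.
  replace (G (r * (1 - q)) (eps p tau) tau (RtoC xs)) with (RtoC 0).
  apply Cmult_0_r.
  change (RtoC xs) with (xs, 0). rewrite G_comp. unfold g in Hg.
  rewrite Rmult_0_r, cos_0, sin_0. unfold RtoC. f_equal; lra.
Qed.

Theorem theorem3 (r kappa tau p : R) :
  0 < r -> 0 < kappa -> 0 < tau -> 0 <= p <= 1 -> eps p tau < 1 ->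
  forall q : R,
    (q >= q_crit r p tau -> linearly_stable r p tau q) /\
    (q < q_crit r p tau -> linearly_unstable r p tau q) /\
    (q <> q_crit r p tau ->
       simple_eigenvalue r p tau q (RtoC 0) /\
       (forall l : C, eigenvalue r p tau q l -> Re l = 0 -> l = RtoC 0)) /\
    (q < q_crit r p tau ->
       exists l1 : C, simple_eigenvalue r p tau q l1 /\ Re l1 > 0 /\
         (forall l : C, eigenvalue r p tau q l -> Re l > 0 -> l = l1)).
Proof.
  intros Hr Hkap Htau Hp Heps q.
  assert (HE0: 0 <= eps p tau) by (unfold eps; pose proof (exp_pos (-tau)); nra).
  assert (HE1: eps p tau * (1 + tau) < 1).
  { unfold eps. pose proof (exp_ineq1 tau ltac:(lra)). pose proof (exp_inv tau).
    pose proof (exp_pos (-tau)). pose proof (exp_pos tau).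
    assert (p * exp (-tau) <= exp (-tau)) by nra.
    assert (exp (-tau) * (1 + tau) < exp (-tau) * exp tau) by (apply Rmult_lt_compat_l; lra).
    nra. }
  assert (Hrel: (q - q_crit r p tau) * (r * (1 - eps p tau)) = 1 - r*(1-q)*(1 - eps p tau)).
  { unfold q_crit. field. split; lra. }
  set (E := eps p tau) in *. set (A := r * (1 - q)) in *.
  assert (HrE: 0 < r * (1 - E)) by (apply Rmult_lt_0_compat; lra).
  assert (Cge: q >= q_crit r p tau -> A * (1 - E) <= 1) by (intros; nra).
  assert (Clt: q < q_crit r p tau -> 1 < A * (1 - E)) by (intros; nra).
  assert (Cgt: q > q_crit r p tau -> A * (1 - E) < 1) by (intros; nra).
  assert (Imax: forall l, eigenvalue r p tau q l -> Re l = 0 -> q <> q_crit r p tau -> l = RtoC 0).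
  { intros [x y] Hl Hx Hq. simpl in Hx. subst x.
    destruct (Ceq_dec (0,y) (RtoC 0)) as [|Hn]; [auto|exfalso].
    destruct (eig_comp _ _ _ _ _ _ Hl Hn) as [HR HI]. fold E A in HR, HI.
    destruct (Rtotal_order q (q_crit r p tau)) as [Hlt|[Heq|Hgt]].
    - exact (imag_axis A E tau Htau HE0 HE1 y (Clt Hlt) HR).
    - contradiction.
    - destruct (no_right A E tau Htau HE0 HE1 0 y ltac:(specialize (Cgt Hgt); lra) HR HI ltac:(lra)).
      apply Hn. subst y. reflexivity. }
  split; [|split; [|split]].
  -
    intros Hq [x y] Hl Hl0. simpl.
    destruct (Rle_lt_dec 0 x) as [Hx|Hx]; [exfalso|lra].
    destruct (eig_comp _ _ _ _ _ _ Hl Hl0) as [HR HI]. fold E A in HR, HI.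
    destruct (no_right A E tau Htau HE0 HE1 x y (Cge Hq) HR HI Hx). subst. apply Hl0; reflexivity.
  - intros Hq. destruct (exist_root A E tau Htau HE0 HE1 (Clt Hq)) as [xs [Hxs [Hg Hk]]].
    exists (RtoC xs). split. apply root_eig. exact Hg. simpl. lra.
  - intros Hq. split.
    + split. unfold eigenvalue. rewrite chi_G. apply Cmult_0_l.
      eexists. split. apply chi_derive.
      intro HD. apply (f_equal fst) in HD.
      change (RtoC 0) with (0,0) in HD at 1 2.
      rewrite G_comp in HD. simpl in HD.
      rewrite !Rmult_0_r, Ropp_0, exp_0, cos_0 in HD.
      fold E A in HD.
      destruct (Rtotal_order q (q_crit r p tau)) as [Hlt|[Heq|Hgt]].
      * specialize (Clt Hlt). lra.
      * contradiction.
      * specialize (Cgt Hgt). lra.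
    + intros l Hl Hre. apply Imax; auto.
  - intros Hq. destruct (exist_root A E tau Htau HE0 HE1 (Clt Hq)) as [xs [Hxs [Hg Hk]]].
    exists (RtoC xs). split; [split|split].
    + apply root_eig. exact Hg.
    + eexists. split. apply chi_derive.
      rewrite Cexp_real.
      intro HD. apply (f_equal fst) in HD.
      change (RtoC xs) with (xs,0) in HD at 1.
      rewrite G_comp in HD. simpl in HD.
      rewrite !Rmult_0_r, cos_0 in HD. fold E A in HD.
      unfold g in Hg. nra.
    + simpl. lra.
    + intros [x y] Hl Hx. simpl in Hx.
      assert (Hn: (x,y) <> RtoC 0) by (intro H; injection H; intros; lra).
      destruct (eig_comp _ _ _ _ _ _ Hl Hn) as [HR HI]. fold E A in HR, HI.
      destruct (uniq_root A E tau Htau HE0 HE1 xs x y (Clt Hq) Hxs Hg Hk HR HI Hx). subst.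
      reflexivity.
Qed.
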